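(* Let $A,B\in\mathbb{R}[x]$. If $(A,B)$ is an interpolatory 1-cube, then $(A,B,B,xA)$ is an interpolatory square.
   Context: A polynomial is standard if it is $\equiv0$ or has positive leading coefficient. It has only nonpositive zeros if it is $\equiv0$ or all its zeros are real and $\le0$. Relation $\prec$: for $A,B$ with only real zeros, with zeros $\xi_1\le\cdots\le\xi_a$ of $A$ and $\theta_1\le\cdots\le\theta_b$ of $B$, $A\prec B$ means one of the following: - $\deg B=\deg A+1$ and $\theta_1\le\xi_1\le\theta_2\le\cdots\le\xi_a\le\theta_{a+1}$; - $\deg A=\deg B$ and $\xi_1\le\theta_1\le\cdots\le\xi_a\le\theta_a$. By convention $A\prec0$ and $0\prec A$. An interpolatory 1-cube is a pair $(A,B)$ of standard polynomials with only nonpositive zeros and $A\prec B$. A quadruple $(A,B,P,Q)$ is an interpolatory square if, for all $\lambda,\rho>0$, both $(\lambda A+\rho B,\lambda P+\rho Q)$ and $(\lambda B+\rho xA,\lambda Q+\rho xP)$ are interpolatory 1-cubes. *)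

(* Defs.v *)
From HB Require Import structures.
From mathcomp Require Import all_boot all_order all_algebra.
From mathcomp Require Import reals.
Set Implicit Arguments. Unset Strict Implicit. Unset Printing Implicit Defensive.
Import Order.TTheory GRing.Theory Num.Theory.
Local Open Scope ring_scope.

Section Defs.
Variable R : realType.

Definition standard (p : {poly R}) : Prop := p = 0 \/ 0 < lead_coef p.

Definition real_zeros (p : {poly R}) (s : seq R) : Prop :=
  p != 0 /\ sorted <=%R s /\
  p = lead_coef p *: \prod_(x <- s) ('X - x%:P).

Definition only_real_zeros (p : {poly R}) : Prop :=
  p = 0 \/ exists s, real_zeros p s.

Definition only_nonpos_zeros (p : {poly R}) : Prop :=
  p = 0 \/ exists s, real_zeros p s /\ all (fun x => x <= 0) s.

Definition interlace_seq (xi theta : seq R) : Prop :=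
  (size theta = (size xi).+1 /\
     forall i, (i < size xi)%N ->
       theta`_i <= xi`_i /\ xi`_i <= theta`_i.+1)
  \/
  (size theta = size xi /\
     forall i, (i < size xi)%N ->
       xi`_i <= theta`_i /\ ((i.+1 < size xi)%N -> theta`_i <= xi`_i.+1)).

Definition prec (A B : {poly R}) : Prop :=
  A = 0 \/ B = 0 \/
  exists xi theta, real_zeros A xi /\ real_zeros B theta /\ interlace_seq xi theta.

Definition interp_cube1 (A B : {poly R}) : Prop :=
  standard A /\ standard B /\ only_nonpos_zeros A /\ only_nonpos_zeros B /\ prec A B.

Definition interp_square (A B P Q : {poly R}) : Prop :=
  forall l r : R, 0 < l -> 0 < r ->
    interp_cube1 (l *: A + r *: B) (l *: P + r *: Q) /\
    interp_cube1 (l *: B + r *: ('X * A)) (l *: Q + r *: ('X * P)).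

End Defs.

(* Main.v *)
Require Import Defs.
From HB Require Import structures.
From mathcomp Require Import all_boot all_order all_algebra.
From mathcomp Require Import reals polyrcf.
From mathcomp Require Import zify ring lra.
Import Order.TTheory GRing.Theory Num.Theory.
Local Open Scope ring_scope.
Set Implicit Arguments. Unset Strict Implicit. Unset Printing Implicit Defensive.


Section Work.
Variable R : realType.
Implicit Types (s x y : seq R).

Definition Mc (s : seq R) (t : R) := count (fun z => t < z) s.
Definition Me (s : seq R) (t : R) := count (fun z => t <= z) s.
Definition ic (x y : seq R) := forall t,
  [/\ (Mc x t <= Mc y t)%N, (Mc y t <= (Mc x t).+1)%N,
      (Me x t <= Me y t)%N & (Me y t <= (Me x t).+1)%N].

Lemma Me_Mc s t : Me s t = (Mc s t + count_mem t s)%N.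
Proof.
rewrite /Me /Mc -count_predUI; rewrite [X in (_ + X)%N](_ : _ = 0%N) ?addn0.
  by apply: eq_count => z /=; rewrite le_eqVlt eq_sym orbC.
by rewrite (@eq_count _ _ pred0) ?count_pred0 // => z /=; case: ltgtP.
Qed.

Lemma ic_perm x x' y y' : perm_eq x x' -> perm_eq y y' -> ic x y -> ic x' y'.
Proof.
move=> px py h t; have := h t; by rewrite /Mc /Me !(permP px) !(permP py).
Qed.

Lemma ic_cons c x y : ic x y -> ic (c :: x) (c :: y).
Proof.
move=> h t; have := h t; rewrite /Mc /Me /=.
by case: (t < c); case: (t <= c) => /= -[] *; split; lia.
Qed.

Lemma ic_uncons c x y : ic (c :: x) (c :: y) -> ic x y.
Proof.
move=> h t; have := h t; rewrite /Mc /Me /=.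
by case: (t < c); case: (t <= c) => /= -[] *; split; lia.
Qed.

Lemma ic_refl x : ic x x.
Proof. by move=> t; split. Qed.

Lemma ic_count x y c : ic x y ->
  (count_mem c x <= (count_mem c y).+1)%N /\ (count_mem c y <= (count_mem c x).+1)%N.
Proof.
move=> h; case: (h c) => *; have := Me_Mc x c; have := Me_Mc y c; lia.
Qed.

Lemma exists_lb s : exists t, forall z, z \in s -> t < z.
Proof.
elim: s => [|a s [t ht]]; first by exists 0.
exists (Num.min t a - 1) => z; rewrite inE => /orP [/eqP ->|zs].
  by rewrite ltrBlDr (@le_lt_trans _ _ a) ?ge_min ?lexx ?orbT // ltrDl.
rewrite ltrBlDr (@le_lt_trans _ _ t) ?ge_min ?lexx //.
by rewrite (lt_trans (ht z zs)) // ltrDl.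
Qed.

Lemma exists_ub s : exists t, forall z, z \in s -> z < t.
Proof.
elim: s => [|a s [t ht]]; first by exists 0.
exists (Num.max t a + 1) => z; rewrite inE => /orP [/eqP ->|zs].
  by rewrite (@le_lt_trans _ _ (Num.max t a)) ?le_max ?lexx ?orbT // ltrDl.
rewrite (@le_lt_trans _ _ (Num.max t a)) ?le_max ?ltrDl //.
by rewrite ltW ?ht.
Qed.

Lemma Mc_low s t : (forall z, z \in s -> t < z) -> Mc s t = size s.
Proof. by move=> h; apply/eqP; rewrite -all_count; apply/allP. Qed.

Lemma Me_low s t : (forall z, z \in s -> t < z) -> Me s t = size s.
Proof. by move=> h; apply/eqP; rewrite -all_count; apply/allP => z /h /ltW. Qed.

Lemma ic_size x y : ic x y -> (size x <= size y <= (size x).+1)%N.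
Proof.
move=> h; have [t ht] := exists_lb (x ++ y).
case: (h t); rewrite !Mc_low => [*||] ; first by apply/andP.
  by move=> z zy; apply: ht; rewrite mem_cat zy orbT.
by move=> z zx; apply: ht; rewrite mem_cat zx.
Qed.


Lemma dom (P : pred R) : (forall a b, a <= b -> P a -> P b) ->
  forall u v, size u = size v -> (forall i, (i < size u)%N -> u`_i <= v`_i) ->
  (count P u <= count P v)%N.
Proof.
move=> mon; elim=> [|a u ih] [|b v] //= [sz] h.
have h0 := h 0%N isT; have := ih v sz (fun i hi => h i.+1 hi).
by case Pa: (P a); rewrite ?(mon _ _ h0 Pa) /=; case: (P b) => /=; lia.
Qed.

Lemma count_behead (P : pred R) s :
  (count P (behead s) <= count P s <= (count P (behead s)).+1)%N.
Proof. by case: s => //= a s; case: (P a) => /=; lia. Qed.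

Lemma count_take (P : pred R) s k :
  (count P (take k s) <= count P s <= count P (take k s) + (size s - k))%N.
Proof.
have e: count P s = (count P (take k s) + count P (drop k s))%N.
  by rewrite -count_cat cat_take_drop.
rewrite e; have := count_size P (drop k s); rewrite size_drop; lia.
Qed.

Lemma interlace_ic x y : interlace_seq x y -> ic x y.
Proof.
have key: forall P : pred R, (forall a b, a <= b -> P a -> P b) ->
    interlace_seq x y ->
    (count P x <= count P y)%N /\ (count P y <= (count P x).+1)%N.
  move=> P mon [[sz h]|[sz h]].
    split.
      apply: (leq_trans (dom mon (u := x) (v := behead y) _ _)).
          by rewrite size_behead sz.
        by move=> i hi; rewrite nth_behead; case: (h i hi).
      by case/andP: (count_behead P y).
    have := count_take P y (size x).
    have := dom mon (u := take (size x) y) (v := x).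
    rewrite size_take sz ltnSn => /(_ erefl) H.
    have {}H : (count P (take (size x) y) <= count P x)%N.
      apply: H => i hi; rewrite nth_take //; by case: (h i hi).
    rewrite ?sz ?subSnn; lia.
  split.
    apply: (dom mon) => [|i hi]; first by rewrite ?sz.
    by case: (h i hi).
  case E: (size x) => [|a].
    by move: sz; rewrite E => /size0nil ->.
  have := count_take P y a; have := count_behead P x.
  have := dom mon (u := take a y) (v := behead x).
  rewrite size_take size_behead sz E ltnSn => /(_ erefl) H.
  have {}H : (count P (take a y) <= count P (behead x))%N.
    apply: H => i hi; rewrite nth_take // nth_behead.
    by case: (h i); rewrite ?E ?ltnS ?(ltnW hi) // => _; apply.
  rewrite subSn // subnn; lia.
move=> h t.
have [h1 h2] := key (fun z => t < z) (fun a b ab ta => lt_le_trans ta ab) h.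
have [h3 h4] := key (fun z => t <= z) (fun a b ab ta => le_trans ta ab) h.
by split.
Qed.

Lemma cnt_ge (P : pred R) s i : (forall j, (i <= j < size s)%N -> P s`_j) ->
  (size s - i <= count P s)%N.
Proof.
move=> h.
have: count P (drop i s) = size (drop i s).
  apply/eqP; rewrite -all_count; apply/(all_nthP 0) => j.
  rewrite size_drop nth_drop => hj; apply: h; clear -hj; apply/andP; split; first by rewrite leq_addr.
  by rewrite -ltn_subRL.
have e: count P s = (count P (take i s) + count P (drop i s))%N.
  by rewrite -count_cat cat_take_drop.
rewrite e size_drop; lia.
Qed.

Lemma cnt_le (P : pred R) s i : (forall j, (j < i)%N -> (j < size s)%N -> ~~ P s`_j) ->
  (count P s <= size s - i)%N.
Proof.
move=> h.
have e: count P s = (count P (take i s) + count P (drop i s))%N.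
  by rewrite -count_cat cat_take_drop.
have: count (predC P) (take i s) = size (take i s).
  apply/eqP; rewrite -all_count; apply/(all_nthP 0) => j.
  rewrite size_take_min leq_min => /andP[j1 j2].
  by rewrite nth_take //=; apply: h.
have := count_predC P (take i s); have := count_size P (drop i s).
rewrite e size_drop; clear; lia.
Qed.

Lemma sorted_nth_le s i j : sorted <=%R s -> (i <= j)%N -> (j < size s)%N ->
  s`_i <= s`_j.
Proof.
move=> ss ij js; apply: (sorted_leq_nth le_trans lexx) => //; rewrite inE //.
exact: leq_ltn_trans ij js.
Qed.

Lemma Mc_ge s t i : (forall j, (i <= j < size s)%N -> t < s`_j) -> (size s - i <= Mc s t)%N.
Proof. exact: cnt_ge. Qed.
Lemma Mc_le s t i : (forall j, (j < i)%N -> (j < size s)%N -> s`_j <= t) -> (Mc s t <= size s - i)%N.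
Proof. by move=> h; apply: cnt_le => j ji js; rewrite -leNgt; apply: h. Qed.
Lemma Me_ge s t i : (forall j, (i <= j < size s)%N -> t <= s`_j) -> (size s - i <= Me s t)%N.
Proof. exact: cnt_ge. Qed.
Lemma Me_le s t i : (forall j, (j < i)%N -> (j < size s)%N -> s`_j < t) -> (Me s t <= size s - i)%N.
Proof. by move=> h; apply: cnt_le => j ji js; rewrite -ltNge; apply: h. Qed.

Lemma ic_interlace x y : sorted <=%R x -> sorted <=%R y -> ic x y -> interlace_seq x y.
Proof.
move=> sx sy h; have /andP[s1 s2] := ic_size h.
have [E|E] : size y = (size x).+1 \/ size y = size x by lia.
  left; split => // i hi; split.
    rewrite leNgt; apply/negP => lt; case: (h x`_i) => _ H _ _.
    have H1 := Mc_le (s := x) (t := x`_i) (i := i.+1) (fun j ji js => sorted_nth_le sx (ji : (j <= i)%N) hi).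
    have H2 := Mc_ge (s := y) (t := x`_i) (i := i)
      (fun j hj => lt_le_trans lt (sorted_nth_le sy (proj1 (andP hj)) (proj2 (andP hj)))).
    move: H H1 H2; rewrite E; lia.
  rewrite leNgt; apply/negP => lt; case: (h x`_i) => _ _ H _.
  have H1 := Me_le (s := y) (t := x`_i) (i := i.+2)
    (fun j ji js => le_lt_trans (sorted_nth_le sy (ji : (j <= i.+1)%N) (ltac:(by rewrite E ltnS) : (i.+1 < size y)%N)) lt).
  have H2 := Me_ge (s := x) (t := x`_i) (i := i)
    (fun j hj => sorted_nth_le sx (proj1 (andP hj)) (proj2 (andP hj))).
  move: H H1 H2; rewrite E; lia.
right; split => // i hi; split.
  rewrite leNgt; apply/negP => lt; case: (h x`_i) => _ _ H _.
  have H1 := Me_le (s := y) (t := x`_i) (i := i.+1)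
    (fun j ji js => le_lt_trans (sorted_nth_le sy (ji : (j <= i)%N) (ltac:(by rewrite E) : (i < size y)%N)) lt).
  have H2 := Me_ge (s := x) (t := x`_i) (i := i)
    (fun j hj => sorted_nth_le sx (proj1 (andP hj)) (proj2 (andP hj))).
  move: H H1 H2; rewrite E; lia.
move=> hi1; rewrite leNgt; apply/negP => lt; case: (h x`_i.+1) => _ H _ _.
have H1 := Mc_le (s := x) (t := x`_i.+1) (i := i.+2) (fun j ji js => sorted_nth_le sx (ji : (j <= i.+1)%N) hi1).
have H2 := Mc_ge (s := y) (t := x`_i.+1) (i := i)
  (fun j hj => lt_le_trans lt (sorted_nth_le sy (proj1 (andP hj)) (proj2 (andP hj)))).
move: H H1 H2; rewrite E; lia.
Qed.

End Work.


Section Work2.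
Variable R : realType.
Implicit Types (s : seq R) (P Q F : {poly R}).

Local Notation pr s := (\prod_(z <- s) ('X - z%:P)).

Lemma sign_prod s (x : R) : x \notin s -> 0 < (-1) ^+ (Mc s x) * (pr s).[x].
Proof.
elim: s => [|a s ih]; first by rewrite big_nil hornerC expr0 mul1r ltr01.
rewrite inE negb_or => /andP[xa xs]; rewrite big_cons hornerM hornerXsubC /Mc /=.
have := ih xs; rewrite /Mc => H; case: (ltgtP x a) xa => // h _.
  rewrite exprD /= expr1 mulN1r mulNr -mulrN -mulNr opprB mulrCA.
  by apply: mulr_gt0 => //; rewrite subr_gt0.
rewrite exprD /= expr0 mul1r mulrCA; apply: mulr_gt0 => //; by rewrite subr_gt0.
Qed.

Lemma rz_lc P s : real_zeros P s -> lead_coef P != 0.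
Proof. by case=> P0 _; rewrite lead_coef_eq0. Qed.

Lemma sign_rz P s x : real_zeros P s -> 0 < lead_coef P -> x \notin s ->
  0 < (-1) ^+ (Mc s x) * P.[x].
Proof.
move=> [P0 [_ E]] lc xs; rewrite E hornerZ mulrCA; apply: mulr_gt0 => //.
exact: sign_prod.
Qed.

Lemma root_rz P s x : real_zeros P s -> x \in s -> P.[x] = 0.
Proof.
move=> [P0 [_ E]] xs; rewrite E hornerZ; apply/eqP; rewrite mulf_eq0; apply/orP; right.
by have := root_prod_XsubC s x; rewrite xs /root.
Qed.

Lemma rz_size P s : real_zeros P s -> size P = (size s).+1.
Proof.
move=> h; have lc := rz_lc h; case: h => [P0 [_ E]].
by rewrite E size_scale // size_prod_XsubC.
Qed.

Lemma prod_perm s s' : pr s = pr s' -> perm_eq s s'.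
Proof.
elim: s s' => [|a s ih] s'.
  rewrite big_nil => E; have := congr1 (fun p : {poly R} => size p) E.
  rewrite /= size_prod_XsubC size_poly1.
  by clear E; case: s'.
move=> E; have as' : a \in s'.
  by rewrite -root_prod_XsubC -E root_prod_XsubC mem_head.
move: E; rewrite (perm_big _ (perm_to_rem as')) !big_cons => /mulfI E.
have /ih : pr s = pr (rem a s') by apply: E; rewrite polyXsubC_eq0.
rewrite -(perm_cons a) => /perm_trans; apply; rewrite perm_sym; exact: perm_to_rem.
Qed.

Lemma rz_uniq P s s' : real_zeros P s -> real_zeros P s' -> s = s'.
Proof.
move=> h1 h2; have lc := rz_lc h1.
case: h1 => [P0 [ss E]]; case: h2 => [_ [ss' E']].
apply: (sorted_eq le_trans le_anti) => //; apply: prod_perm.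
by apply: (scalerI lc); rewrite -E -E'.
Qed.

Lemma rz_scale P s c : real_zeros P s -> c != 0 -> real_zeros (c *: P) s.
Proof.
move=> h c0; have lc := rz_lc h; case: h => [P0 [ss E]]; split.
  by rewrite scaler_eq0 negb_or c0.
by split => //; rewrite lead_coefZ -scalerA -E.
Qed.

Lemma rz_mulX P s c : real_zeros P s ->
  real_zeros (('X - c%:P) * P) (sort <=%R (c :: s)).
Proof.
move=> h; have lc := rz_lc h; case: h => [P0 [ss E]]; split.
  by rewrite mulf_neq0 // polyXsubC_eq0.
split; first by apply: sort_sorted; exact: le_total.
rewrite (perm_big _ (permEl (perm_sort _ _))) big_cons.
rewrite lead_coefM lead_coefXsubC mul1r {1}E.
by rewrite scalerAr.
Qed.

Lemma rz_rem P s c : real_zeros P s -> c \in s ->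
  real_zeros (lead_coef P *: pr (rem c s)) (rem c s) /\
  P = ('X - c%:P) * (lead_coef P *: pr (rem c s)).
Proof.
move=> h cs; have lc := rz_lc h; case: h => [P0 [ss E]]; split.
  split; first by rewrite scaler_eq0 negb_or lc /= monic_neq0 // monic_prod_XsubC.
  split; first by apply: (subseq_sorted le_trans (rem_subseq c s)).
  by rewrite lead_coefZ (monicP (monic_prod_XsubC _ _ _)) mulr1.
by rewrite {1}E (perm_big _ (perm_to_rem cs)) big_cons scalerAr.
Qed.

Lemma rz_X P s : real_zeros P s -> all (fun z => z <= 0) s ->
  real_zeros ('X * P) (rcons s 0).
Proof.
move=> h al; have lc := rz_lc h; case: h => [P0 [ss E]]; split.
  by rewrite mulf_neq0 // polyX_eq0.
split.
  clear E P0 lc; case: s ss al => // a s' ss /allP al /=; rewrite rcons_path; apply/andP; split => //.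
  by apply: al; exact: mem_last.
rewrite -cats1 big_cat big_seq1 /= subr0 lead_coefM lead_coefX mul1r.
by rewrite {1}E mulrC scalerAl.
Qed.

Lemma comb_lc P Q l r : 0 < lead_coef P -> 0 < lead_coef Q -> 0 < l -> 0 < r ->
  0 < lead_coef (l *: P + r *: Q) /\ size (l *: P + r *: Q) = maxn (size P) (size Q).
Proof.
move=> hP hQ hl hr.
have sP : size (l *: P) = size P by rewrite size_scale // gt_eqF.
have sQ : size (r *: Q) = size Q by rewrite size_scale // gt_eqF.
case: (ltngtP (size P) (size Q)) => h.
- have e1 : lead_coef (l *: P + r *: Q) = r * lead_coef Q.
    by rewrite addrC lead_coefDl ?sP ?sQ // lead_coefZ.
  have e2 : size (l *: P + r *: Q) = size Q by rewrite addrC size_polyDl ?sP ?sQ.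
  by split; [rewrite e1 mulr_gt0 | rewrite e2; move: h; clear; lia].
- have e1 : lead_coef (l *: P + r *: Q) = l * lead_coef P.
    by rewrite lead_coefDl ?sP ?sQ // lead_coefZ.
  have e2 : size (l *: P + r *: Q) = size P by rewrite size_polyDl ?sP ?sQ.
  by split; [rewrite e1 mulr_gt0 | rewrite e2; move: h; clear; lia].
have nP : size P = (size P).-1.+1 by rewrite polySpred // -lead_coef_eq0 gt_eqF.
have nQ : size Q = (size P).-1.+1 by rewrite -h.
set S := l *: P + r *: Q.
have cS : S`_(size P).-1 = l * lead_coef P + r * lead_coef Q.
  by rewrite /S coefD !coefZ /lead_coef -h.
have pos : 0 < S`_(size P).-1 by rewrite cS addr_gt0 // mulr_gt0.
have sS : size S = size P.
  apply/anti_leq/andP; split.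
    by rewrite (leq_trans (size_polyD _ _)) // sP sQ h maxnn.
  rewrite nP ltnNge; apply/negP => /leq_sizeP /(_ _ (leqnn _)) E.
  by move: pos; rewrite E ltxx.
split; first by rewrite /lead_coef sS.
by rewrite sS ?maxnn.
Qed.

End Work2.


Section Work3.
Variable R : realType.
Implicit Types (s t : seq R) (P Q F : {poly R}).

Local Notation pr s := (\prod_(z <- s) ('X - z%:P)).

Lemma lt_sorted_le t : sorted <%R t -> sorted <=%R t.
Proof. by rewrite lt_sorted_uniq_le => /andP[]. Qed.

Lemma Mc_nth t i : sorted <%R t -> (i < size t)%N -> Mc t t`_i = (size t - i.+1)%N.
Proof.
move=> st it; have sl := lt_sorted_le st.
have h1 := Mc_le (s := t) (t := t`_i) (i := i.+1)
  (fun j ji js => sorted_nth_le sl (ji : (j <= i)%N) it).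
have h2 := Mc_ge (s := t) (t := t`_i) (i := i.+1)
  (fun j hj => sorted_ltn_nth lt_trans 0 st i j (it : i \in [pred n | (n < size t)%N])
     (proj2 (andP hj) : j \in [pred n | (n < size t)%N]) (proj1 (andP hj))).
by apply/anti_leq; rewrite h1 h2.
Qed.

Lemma build (k : nat) (Pr : nat -> R -> Prop) :
  (forall i, (i < k)%N -> exists y, Pr i y) ->
  exists s, size s = k /\ forall i, (i < k)%N -> Pr i s`_i.
Proof.
elim: k => [|k ih] h; first by exists [::].
have [s [sz hs]] : exists s, size s = k /\ forall i, (i < k)%N -> Pr i s`_i.
  by apply: ih => i ik; apply: h; exact: ltnW.
have [y hy] := h k (ltnSn k).
exists (rcons s y); rewrite size_rcons sz; split => // i ik.
rewrite nth_rcons sz; case: ltnP => [/hs //|ki].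
have -> : i = k by apply/anti_leq; rewrite ki andbT -ltnS.
by rewrite ?ltnn eqxx.
Qed.

Lemma size2_poly (q : {poly R}) : size q = 2%N ->
  q = lead_coef q *: ('X - (- q`_0 / lead_coef q)%:P).
Proof.
move=> sq; have lc : lead_coef q != 0 by rewrite lead_coef_eq0 -size_poly_gt0 sq.
apply/polyP => i; rewrite coefZ coefB coefX coefC.
case: i => [|[|i]] /=.
- by rewrite sub0r mulNr opprK mulrCA divff // mulr1.
- by rewrite /lead_coef sq /= ?mulr1n ?mulr0n subr0 mulr1.
rewrite ?mulr0n subr0 mulr0; have /leq_sizeP := eq_leq sq; by apply.
Qed.

Lemma core t F : sorted <%R t -> 0 < lead_coef F ->
  (size F == size t) || (size F == (size t).+1) ->
  (forall x, x \in t -> 0 < (-1) ^+ (Mc t x) * F.[x]) ->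
  exists eta, real_zeros F eta /\ ic eta t.
Proof.
move=> st lcF szF sgn.
have F0 : F != 0 by rewrite -lead_coef_eq0 gt_eqF.
case: t st szF sgn => [|t0 t'] st szF sgn.
  have sz1 : size F = 1%N.
    by move: szF; rewrite orbC /= => /orP[/eqP //|]; rewrite size_poly_eq0 (negPf F0).
  exists [::]; split; last by move=> x; split.
  split => //; split => //.
  by rewrite big_nil /lead_coef sz1 {1}(size1_polyC (eq_leq sz1)) alg_polyC.
set t := t0 :: t' in st szF sgn *.
set k := size t'.
have sgn' : forall i, (i < k.+1)%N -> 0 < (-1) ^+ (k - i) * F.[t`_i].
  move=> i ik; have := sgn t`_i (mem_nth 0 (ik : (i < size t)%N)).
  by rewrite Mc_nth // /= subSS.
have hroot : forall i, (i < k)%N -> exists y, (t`_i < y < t`_i.+1) /\ root F y.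
  move=> i ik.
  have e : (-1) ^+ (k - i) = - (-1) ^+ (k - i.+1) :> R.
    by rewrite -(subnSK ik) exprS mulN1r.
  have h1 := sgn' i (ltnW ik); have h2 := sgn' i.+1 ik.
  rewrite e in h1; set E := (-1) ^+ (k - i.+1) : R in h1 h2.
  have EE : E * E = 1 by rewrite /E -exprMn mulrNN mulr1 expr1n.
  have neg : F.[t`_i] * F.[t`_i.+1] < 0.
    have -> : F.[t`_i] * F.[t`_i.+1] = - ((- E * F.[t`_i]) * (E * F.[t`_i.+1])).
      by rewrite !mulNr opprK mulrACA EE mul1r.
    by rewrite oppr_lt0 mulr_gt0.
  have lt_t : t`_i < t`_i.+1.
    by apply: (sorted_ltn_nth lt_trans 0 st); rewrite ?inE //= ltnS ltnW.
  have [y + ry] := poly_ivtoo (ltW lt_t) neg.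
  by rewrite in_itv /= => /andP [y1 y2]; exists y; split => //; apply/andP; split.
have [s [sz hs]] := build (Pr := fun i y => (t`_i < y < t`_i.+1) /\ root F y) hroot.
have ss : sorted <%R s.
  apply/(sortedP 0) => i hi; rewrite sz in hi.
  have [/andP[_ a] _] := hs i (ltnW hi); have [/andP[b _] _] := hs i.+1 hi.
  exact: lt_trans a b.
have rs : all (root F) s by apply/(all_nthP 0) => i; rewrite sz => /hs [].
have us : uniq s by move: ss; rewrite lt_sorted_uniq_le => /andP[].
have [q Fq] : exists q, F = q * pr s.
  by apply: uniq_roots_prod_XsubC rs _; rewrite uniq_rootsE.
have q0 : q != 0 by apply: contra F0; rewrite Fq => /eqP ->; rewrite mul0r.
have szq : size F = (size q + k)%N.
  by rewrite Fq size_Mmonic ?monic_prod_XsubC // size_prod_XsubC sz addnS.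
have lcq : lead_coef F = lead_coef q by rewrite Fq lead_coef_Mmonic // monic_prod_XsubC.
have sl := lt_sorted_le ss.
case/orP: szF => /eqP szF'.
  have sq1 : size q = 1%N.
    by move: szF'; rewrite szq /t /= -/k; clear; lia.
  have qc : q = (lead_coef F)%:P.
    by rewrite lcq /lead_coef sq1; apply: size1_polyC; rewrite sq1.
  exists s; split.
    by split => //; split => //; rewrite {1}Fq qc mul_polyC.
  apply: interlace_ic; left; split; first by rewrite sz.
  by move=> i hi; rewrite sz in hi; have [/andP[a b] _] := hs i hi; split; exact: ltW.
have sq2 : size q = 2%N.
  by move: szF'; rewrite szq /t /= -/k; clear; lia.
set y0 := - q`_0 / lead_coef q.
have qE := size2_poly sq2.
have FE : F = lead_coef F *: (('X - y0%:P) * pr s).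
  by rewrite {1}Fq {1}qE lcq scalerAl.
have t0s : forall z, z \in s -> t0 < z.
  move=> z /(nthP 0) [i hi <-]; rewrite sz in hi; have [/andP[a _] _] := hs i hi.
  apply: le_lt_trans a.
  exact: (sorted_nth_le (lt_sorted_le st) (leq0n i) (ltnW hi : (i < size t)%N)).
have Mcs : Mc s t0 = k by rewrite Mc_low // sz.
have sp : 0 < (-1) ^+ k * (pr s).[t0].
  by rewrite -Mcs; apply: sign_prod; apply/negP => /t0s; rewrite ltxx.
have st0 := sgn' 0 (ltn0Sn k); rewrite subn0 /= in st0.
rewrite FE hornerZ hornerM hornerXsubC in st0.
have eq : (-1) ^+ k * (lead_coef F * ((t0 - y0) * (pr s).[t0])) =
    (lead_coef F * (t0 - y0)) * ((-1) ^+ k * (pr s).[t0]) by ring.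
rewrite eq pmulr_lgt0 // pmulr_rgt0 // subr_gt0 in st0.
exists (y0 :: s); split.
  split => //; split.
    rewrite /= (path_sortedE le_trans) sl andbT.
    by apply/allP => z zs; apply: ltW; exact: lt_trans st0 (t0s z zs).
  by rewrite big_cons.
apply: interlace_ic; right; split; first by rewrite /= sz.
move=> i; rewrite /= sz => hi; split.
  case: i hi => [|i] hi /=; first exact: ltW.
  by have [/andP[_ b] _] := hs i hi; exact: ltW b.
by move=> hi1; have [/andP[a _] _] := hs i hi1; exact: ltW a.
Qed.

End Work3.


Section Work4.
Variable R : realType.
Implicit Types (s t : seq R) (P Q F : {poly R}).

Local Notation pr s := (\prod_(z <- s) ('X - z%:P)).

Lemma Mc_rcons s T x : Mc (rcons s T) x = (Mc s x + (x < T)%R)%N.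
Proof. by rewrite /Mc -cats1 count_cat /= addn0. Qed.

Lemma Me_rcons s T x : Me (rcons s T) x = (Me s x + (x <= T)%R)%N.
Proof. by rewrite /Me -cats1 count_cat /= addn0. Qed.

Lemma Mc_high s x : (forall z, z \in s -> z <= x) -> Mc s x = 0%N.
Proof.
move=> h; apply/eqP; rewrite -leqn0 leqNgt -has_count; apply/hasPn => z /h.
by rewrite leNgt.
Qed.

Lemma Me_high s x : (forall z, z \in s -> z < x) -> Me s x = 0%N.
Proof.
move=> h; apply/eqP; rewrite -leqn0 leqNgt -has_count; apply/hasPn => z /h.
by rewrite ltNge.
Qed.

Lemma ic_drop_top (eta xi : seq R) T : (forall z, z \in xi -> z < T) ->
  ic eta (rcons xi T) -> ic xi eta.
Proof.
move=> hT h s; have := h s; rewrite Mc_rcons Me_rcons.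
case: (ltP s T) => sT.
  rewrite (ltW sT) /= => -[*]; split; lia.
have Mx : Mc xi s = 0%N by apply: Mc_high => z /hT zT; exact: ltW (lt_le_trans zT sT).
rewrite Mx; case: (leP s T) => sT'.
  move=> -[*]; split; lia.
have Ex : Me xi s = 0%N by apply: Me_high => z /hT zT; exact: lt_trans zT sT'.
rewrite Ex => -[*]; split; lia.
Qed.

Lemma sorted_rcons_lt s T : sorted <%R s -> (forall z, z \in s -> z < T) ->
  sorted <%R (rcons s T).
Proof.
case: s => // a s ss hT /=; rewrite rcons_path; apply/andP; split => //.
by apply: hT; exact: mem_last.
Qed.

Lemma comb_pos (e : nat) Q1 Q2 l r x : 0 < l -> 0 < r ->
  0 <= (-1) ^+ e * Q1.[x] -> 0 <= (-1) ^+ e * Q2.[x] ->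
  (0 < (-1) ^+ e * Q1.[x]) || (0 < (-1) ^+ e * Q2.[x]) ->
  0 < (-1) ^+ e * (l *: Q1 + r *: Q2).[x].
Proof.
move=> hl hr h1 h2 h.
rewrite hornerD !hornerZ mulrDr !(mulrCA ((-1) ^+ e)).
move: h1 h2 h; set a := (-1) ^+ e * Q1.[x]; set b := (-1) ^+ e * Q2.[x].
move=> h1 h2 /orP[h|h]; nra.
Qed.

Lemma count_mem_pos s c : (0 < count_mem c s)%N = (c \in s).
Proof. by rewrite -has_count has_pred1. Qed.

Lemma L2_strict (xi th1 th2 : seq R) Q1 Q2 l r : sorted <=%R xi -> 0 < l -> 0 < r ->
  real_zeros Q1 th1 -> real_zeros Q2 th2 -> 0 < lead_coef Q1 -> 0 < lead_coef Q2 ->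
  ic xi th1 -> ic xi th2 -> ~~ has (fun c => (c \in th1) && (c \in th2)) xi ->
  exists th, real_zeros (l *: Q1 + r *: Q2) th /\ ic xi th.
Proof.
move=> sx hl hr r1 r2 p1 p2 i1 i2 nh.
have ux : uniq xi.
  apply: count_mem_uniq => c; case cx: (c \in xi); last first.
    by apply/eqP; rewrite -leqn0 leqNgt count_mem_pos cx.
  have nb := hasPn nh c cx.
  have cp : (0 < count_mem c xi)%N by rewrite count_mem_pos.
  case: (ltnP 1 (count_mem c xi)) => [two|le1]; last by move: cp le1; clear; lia.
  have [a1 _] := ic_count c i1; have [a2 _] := ic_count c i2.
  have c1 : c \in th1 by rewrite -count_mem_pos; move: two a1; clear; lia.
  have c2 : c \in th2 by rewrite -count_mem_pos; move: two a2; clear; lia.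
  by move: nb; rewrite c1 c2.
have sxl : sorted <%R xi by rewrite lt_sorted_uniq_le ux.
have [T hT] := exists_ub (xi ++ th1 ++ th2).
have hTx : forall z, z \in xi -> z < T by move=> z zx; apply: hT; rewrite mem_cat zx.
have hT1 : forall z, z \in th1 -> z < T.
  by move=> z zx; apply: hT; rewrite !mem_cat zx orbT.
have hT2 : forall z, z \in th2 -> z < T.
  by move=> z zx; apply: hT; rewrite !mem_cat zx !orbT.
have [lcF szF] := comb_lc p1 p2 hl hr.
have st := sorted_rcons_lt sxl hTx.
have [eta [rze ice]] : exists eta, real_zeros (l *: Q1 + r *: Q2) eta /\ ic eta (rcons xi T).
  apply: core => //.
    have := ic_size i1; have := ic_size i2.
    rewrite szF (rz_size r1) (rz_size r2) size_rcons; clear; case/andP => a1 b1; case/andP => a2 b2.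
    set m := maxn _ _.
    have : (m = (size xi).+1) \/ (m = (size xi).+2) by rewrite /m; lia.
    by case=> ->; rewrite eqxx ?orbT.
  have posT : forall Q th, real_zeros Q th -> 0 < lead_coef Q ->
      (forall z, z \in th -> z < T) -> 0 < Q.[T].
    move=> Q th rQ pQ hth.
    have := sign_rz (x := T) rQ pQ; rewrite Mc_high; last by move=> z /hth /ltW.
    rewrite expr0 mul1r; apply; apply/negP => /hth; by rewrite ltxx.
  move=> x; rewrite mem_rcons inE => /orP[/eqP ->|xx].
    rewrite Mc_rcons Mc_high; last by move=> z /hTx /ltW.
    rewrite ltxx addn0 expr0 mul1r hornerD !hornerZ.
    by rewrite addr_gt0 // mulr_gt0 // (posT _ _ r1 p1 hT1, posT _ _ r2 p2 hT2).
  rewrite Mc_rcons (hTx x xx) addn1.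
  have key : forall Q th, real_zeros Q th -> 0 < lead_coef Q -> ic xi th ->
      x \notin th -> 0 < (-1) ^+ (Mc xi x).+1 * Q.[x].
    move=> Q th rQ pQ iQ nx.
    have -> : (Mc xi x).+1 = Mc th x.
      have e1 := Me_Mc xi x; have e2 := Me_Mc th x.
      have c0 : count_mem x th = 0%N by apply/eqP; rewrite -leqn0 leqNgt count_mem_pos.
      have c1 : (0 < count_mem x xi)%N by rewrite count_mem_pos.
      case: (iQ x) => a1 a2 a3 a4; move: e1 e2 c0 c1 a1 a2 a3 a4; clear; lia.
    exact: sign_rz.
  have nb := hasPn nh x xx.
  have w : forall Q th, real_zeros Q th -> 0 < lead_coef Q -> ic xi th ->
      0 <= (-1) ^+ (Mc xi x).+1 * Q.[x].
    move=> Q th rQ pQ iQ; case xt: (x \in th).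
      by rewrite (root_rz rQ xt) mulr0.
    by apply: ltW; apply: (key Q th) => //; rewrite xt.
  apply: comb_pos => //; [exact: w r1 p1 i1|exact: w r2 p2 i2|].
  move: nb; case x1: (x \in th1) => /=.
    by move=> x2; rewrite (key Q2 th2) ?orbT //.
  by move=> _; rewrite (key Q1 th1) // x1.
by exists eta; split => //; apply: ic_drop_top ice.
Qed.


Lemma L3_strict (th xi1 xi2 : seq R) P1 P2 l r : sorted <=%R th -> 0 < l -> 0 < r ->
  real_zeros P1 xi1 -> real_zeros P2 xi2 -> 0 < lead_coef P1 -> 0 < lead_coef P2 ->
  ic xi1 th -> ic xi2 th -> ~~ has (fun c => (c \in xi1) && (c \in xi2)) th ->
  exists xi, real_zeros (l *: P1 + r *: P2) xi /\ ic xi th.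
Proof.
move=> sx hl hr r1 r2 p1 p2 i1 i2 nh.
have ux : uniq th.
  apply: count_mem_uniq => c; case cx: (c \in th); last first.
    by apply/eqP; rewrite -leqn0 leqNgt count_mem_pos cx.
  have nb := hasPn nh c cx.
  have cp : (0 < count_mem c th)%N by rewrite count_mem_pos.
  case: (ltnP 1 (count_mem c th)) => [two|le1]; last by move: cp le1; clear; lia.
  have [_ a1] := ic_count c i1; have [_ a2] := ic_count c i2.
  have c1 : c \in xi1 by rewrite -count_mem_pos; move: two a1; clear; lia.
  have c2 : c \in xi2 by rewrite -count_mem_pos; move: two a2; clear; lia.
  by move: nb; rewrite c1 c2.
have sxl : sorted <%R th by rewrite lt_sorted_uniq_le ux.
have [lcF szF] := comb_lc p1 p2 hl hr.
apply: core => //.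
  have := ic_size i1; have := ic_size i2.
  rewrite szF (rz_size r1) (rz_size r2); clear; case/andP => a1 b1; case/andP => a2 b2.
  set m := maxn _ _.
  have : (m = size th) \/ (m = (size th).+1) by rewrite /m; lia.
  by case=> ->; rewrite eqxx ?orbT.
move=> x xx.
have key : forall Q xi, real_zeros Q xi -> 0 < lead_coef Q -> ic xi th ->
    x \notin xi -> 0 < (-1) ^+ (Mc th x) * Q.[x].
  move=> Q xi rQ pQ iQ nx.
  have -> : Mc th x = Mc xi x.
    have e1 := Me_Mc xi x; have e2 := Me_Mc th x.
    have c0 : count_mem x xi = 0%N by apply/eqP; rewrite -leqn0 leqNgt count_mem_pos.
    have c1 : (0 < count_mem x th)%N by rewrite count_mem_pos.
    case: (iQ x) => a1 a2 a3 a4; move: e1 e2 c0 c1 a1 a2 a3 a4; clear; lia.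
  exact: sign_rz.
have nb := hasPn nh x xx.
have w : forall Q xi, real_zeros Q xi -> 0 < lead_coef Q -> ic xi th ->
    0 <= (-1) ^+ (Mc th x) * Q.[x].
  move=> Q xi rQ pQ iQ; case xt: (x \in xi).
    by rewrite (root_rz rQ xt) mulr0.
  by apply: ltW; apply: (key Q xi) => //; rewrite xt.
apply: comb_pos => //; [exact: w r1 p1 i1|exact: w r2 p2 i2|].
move: nb; case x1: (x \in xi1) => /=.
  by move=> x2; rewrite (key P2 xi2) ?orbT //.
by move=> _; rewrite (key P1 xi1) // x1.
Qed.

Lemma rem_facts (P : {poly R}) s c : real_zeros P s -> 0 < lead_coef P -> c \in s ->
  exists P', [/\ real_zeros P' (rem c s), 0 < lead_coef P' & P = ('X - c%:P) * P'].
Proof.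
move=> rP pP cs; have [rz E] := rz_rem rP cs.
exists (lead_coef P *: pr (rem c s)); split => //.
by rewrite lead_coefZ (monicP (monic_prod_XsubC _ _ _)) mulr1.
Qed.

Lemma L2 n : forall (xi th1 th2 : seq R) Q1 Q2 l r, size xi = n ->
  sorted <=%R xi -> 0 < l -> 0 < r ->
  real_zeros Q1 th1 -> real_zeros Q2 th2 -> 0 < lead_coef Q1 -> 0 < lead_coef Q2 ->
  ic xi th1 -> ic xi th2 ->
  exists th, real_zeros (l *: Q1 + r *: Q2) th /\ ic xi th.
Proof.
elim: n => [|n ih] xi th1 th2 Q1 Q2 l r sz sx hl hr r1 r2 p1 p2 i1 i2.
  case: (boolP (has (fun c => (c \in th1) && (c \in th2)) xi)) => [/hasP[c cx _]|nh].
    by move: cx; rewrite (size0nil sz).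
  exact: (L2_strict sx hl hr r1 r2 p1 p2 i1 i2 nh).
case: (boolP (has (fun c => (c \in th1) && (c \in th2)) xi)) => [/hasP[c cx /andP[c1 c2]]|nh]; last first.
  exact: (L2_strict sx hl hr r1 r2 p1 p2 i1 i2 nh).
have [Q1' [rz1 lc1 E1]] := rem_facts r1 p1 c1.
have [Q2' [rz2 lc2 E2]] := rem_facts r2 p2 c2.
have i1' : ic (rem c xi) (rem c th1).
  by apply: (ic_uncons (c := c)); apply: ic_perm (perm_to_rem cx) (perm_to_rem c1) i1.
have i2' : ic (rem c xi) (rem c th2).
  by apply: (ic_uncons (c := c)); apply: ic_perm (perm_to_rem cx) (perm_to_rem c2) i2.
have sx' : sorted <=%R (rem c xi) by apply: (subseq_sorted le_trans (rem_subseq c xi)).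
have sz' : size (rem c xi) = n by rewrite size_rem // sz.
have [th' [rzt ict]] := ih _ _ _ _ _ l r sz' sx' hl hr rz1 rz2 lc1 lc2 i1' i2'.
exists (sort <=%R (c :: th')); split.
  by rewrite E1 E2 !scalerAr -mulrDr; apply: rz_mulX.
apply: (ic_perm (x := c :: rem c xi) (y := c :: th')).
- by rewrite perm_sym perm_to_rem.
- by rewrite perm_sym perm_sort perm_refl.
- exact: ic_cons.
Qed.

Lemma L3 n : forall (th xi1 xi2 : seq R) P1 P2 l r, size th = n ->
  sorted <=%R th -> 0 < l -> 0 < r ->
  real_zeros P1 xi1 -> real_zeros P2 xi2 -> 0 < lead_coef P1 -> 0 < lead_coef P2 ->
  ic xi1 th -> ic xi2 th ->
  exists xi, real_zeros (l *: P1 + r *: P2) xi /\ ic xi th.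
Proof.
elim: n => [|n ih] th xi1 xi2 P1 P2 l r sz sx hl hr r1 r2 p1 p2 i1 i2.
  case: (boolP (has (fun c => (c \in xi1) && (c \in xi2)) th)) => [/hasP[c cx _]|nh].
    by move: cx; rewrite (size0nil sz).
  exact: (L3_strict sx hl hr r1 r2 p1 p2 i1 i2 nh).
case: (boolP (has (fun c => (c \in xi1) && (c \in xi2)) th)) => [/hasP[c cx /andP[c1 c2]]|nh]; last first.
  exact: (L3_strict sx hl hr r1 r2 p1 p2 i1 i2 nh).
have [P1' [rz1 lc1 E1]] := rem_facts r1 p1 c1.
have [P2' [rz2 lc2 E2]] := rem_facts r2 p2 c2.
have i1' : ic (rem c xi1) (rem c th).
  by apply: (ic_uncons (c := c)); apply: ic_perm (perm_to_rem c1) (perm_to_rem cx) i1.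
have i2' : ic (rem c xi2) (rem c th).
  by apply: (ic_uncons (c := c)); apply: ic_perm (perm_to_rem c2) (perm_to_rem cx) i2.
have sx' : sorted <=%R (rem c th) by apply: (subseq_sorted le_trans (rem_subseq c th)).
have sz' : size (rem c th) = n by rewrite size_rem // sz.
have [xi' [rzt ict]] := ih _ _ _ _ _ l r sz' sx' hl hr rz1 rz2 lc1 lc2 i1' i2'.
exists (sort <=%R (c :: xi')); split.
  by rewrite E1 E2 !scalerAr -mulrDr; apply: rz_mulX.
apply: (ic_perm (x := c :: xi') (y := c :: rem c th)).
- by rewrite perm_sym perm_sort perm_refl.
- by rewrite perm_sym perm_to_rem.
- exact: ic_cons.
Qed.

End Work4.


Section Work5.
Variable R : realType.
Implicit Types (P Q F : {poly R}).

Lemma ic_shift (x y : seq R) : all (fun z => z <= 0) x -> all (fun z => z <= 0) y ->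
  ic x y -> ic y (rcons x 0).
Proof.
move=> /allP ax /allP ay h t; have := h t; rewrite Mc_rcons Me_rcons => -[a1 a2 a3 a4].
have [Mc0 Me0] : (0 <= t -> Mc x t = 0%N /\ Mc y t = 0%N) /\
                 (0 < t -> Me x t = 0%N /\ Me y t = 0%N).
  split=> t0; split.
  - by apply: Mc_high => z /ax z0; exact: le_trans z0 t0.
  - by apply: Mc_high => z /ay z0; exact: le_trans z0 t0.
  - by apply: Me_high => z /ax z0; exact: le_lt_trans z0 t0.
  - by apply: Me_high => z /ay z0; exact: le_lt_trans z0 t0.
split.
- case: (ltP t 0) => t0 /=; first by move: a1 a2; clear; lia.
  by have [-> ->] := Mc0 t0.
- case: (ltP t 0) => t0 /=; first by move: a1 a2; clear; lia.
  by have [-> ->] := Mc0 t0.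
- case: (leP t 0) => t0 /=; first by move: a3 a4; clear; lia.
  by have [-> ->] := Me0 t0.
- case: (leP t 0) => t0 /=; first by move: a3 a4; clear; lia.
  by have [-> ->] := Me0 t0.
Qed.

Lemma pos_right Q (s : seq R) t : real_zeros Q s -> 0 < lead_coef Q ->
  all (fun z => z <= 0) s -> 0 < t -> 0 < Q.[t].
Proof.
move=> rQ pQ /allP al t0.
have := sign_rz (x := t) rQ pQ; rewrite Mc_high; last first.
  by move=> z /al z0; exact: ltW (le_lt_trans z0 t0).
rewrite expr0 mul1r; apply; apply/negP => /al; by rewrite leNgt t0.
Qed.

Lemma nonpos_zeros F (s : seq R) : real_zeros F s -> (forall t, 0 < t -> 0 < F.[t]) ->
  all (fun z => z <= 0) s.
Proof.
move=> rF h; apply/allP => z zs; rewrite leNgt; apply/negP => /h.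
by rewrite (root_rz rF zs) ltxx.
Qed.

Lemma cube_of P Q (p q : seq R) : real_zeros P p -> real_zeros Q q ->
  0 < lead_coef P -> 0 < lead_coef Q ->
  all (fun z => z <= 0) p -> all (fun z => z <= 0) q -> ic p q -> interp_cube1 P Q.
Proof.
move=> rP rQ lP lQ ap aq i.
split; first by right.
split; first by right.
split; first by right; exists p.
split; first by right; exists q.
right; right; exists p, q; split => //; split => //.
by apply: ic_interlace => //; [case: rP => _ [] | case: rQ => _ []].
Qed.

Lemma cube00 : interp_cube1 (0 : {poly R}) 0.
Proof. by split; [left|split; [left|split; [left|split; [left|left]]]]. Qed.

Lemma lcXM P : lead_coef ('X * P) = lead_coef P.
Proof. by rewrite mulrC lead_coefMX. Qed.

Lemma all_rcons0 (s : seq R) : all (fun z => z <= 0) s -> all (fun z => z <= 0) (rcons s 0).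
Proof. by move=> h; rewrite all_rcons lexx. Qed.

Lemma get_zeros P : standard P -> only_nonpos_zeros P -> P != 0 ->
  exists s, [/\ real_zeros P s, 0 < lead_coef P & all (fun z => z <= 0) s].
Proof.
move=> [->|lc]; first by rewrite eqxx.
by move=> [->|[s [rs al]]]; [rewrite eqxx | exists s].
Qed.

Ltac fin := solve [ assumption | exact: rz_scale | by rewrite lead_coefZ ?lcXM mulr_gt0
  | exact: ic_refl ].

Lemma main (A B : {poly R}) : interp_cube1 A B -> interp_square A B B ('X * A).
Proof.
move=> [sA [sB [nA [nB pAB]]]] l r hl hr.
have l0 : l != 0 by rewrite gt_eqF.
have r0 : r != 0 by rewrite gt_eqF.
have [A0|A0] := eqVneq A 0; have [B0|B0] := eqVneq B 0.
- by rewrite A0 B0 !mulr0 !scaler0 !addr0; split; exact: cube00.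
- have [th [rB pB aB]] := get_zeros sB nB B0.
  rewrite A0 !mulr0 !scaler0 !add0r !addr0.
  have rXB := rz_X rB aB.
  have sh := ic_shift aB aB (ic_refl th).
  have ar := all_rcons0 aB.
  split.
    by apply: (cube_of (p := th) (q := th)); fin.
  by apply: (cube_of (p := th) (q := rcons th 0)); fin.
- have [xi [rA pA aA]] := get_zeros sA nA A0.
  rewrite B0 !mulr0 !scaler0 !add0r !addr0.
  have rXA := rz_X rA aA.
  have sh := ic_shift aA aA (ic_refl xi).
  have ar := all_rcons0 aA.
  split.
    by apply: (cube_of (p := xi) (q := rcons xi 0)); fin.
  by apply: (cube_of (p := rcons xi 0) (q := rcons xi 0)); fin.
have [xi [rA pA aA]] := get_zeros sA nA A0.
have [th [rB pB aB]] := get_zeros sB nB B0.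
have iAB : ic xi th.
  case: pAB => [/eqP|[/eqP|[xi' [th' [rA' [rB' il]]]]]]; rewrite ?(negPf A0) ?(negPf B0) //.
  rewrite (rz_uniq rA rA') (rz_uniq rB rB'); apply: interlace_ic => //.
have sxi : sorted <=%R xi by case: rA => _ [].
have sth : sorted <=%R th by case: rB => _ [].
set C := l *: A + r *: B.
set D := l *: B + r *: ('X * A).
have [zeta [rC iC]] := L2 (erefl (size xi)) sxi hl hr rA rB pA pB (ic_refl xi) iAB.
have [zeta' [rC' iC']] := L3 (erefl (size th)) sth hl hr rA rB pA pB iAB (ic_refl th).
rewrite -/C in rC rC'; rewrite -(rz_uniq rC rC') in iC'.
have [lcC _] := comb_lc pA pB hl hr.
have aC : all (fun z => z <= 0) zeta.
  apply: (nonpos_zeros rC) => t t0; rewrite /C hornerD !hornerZ.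
  by rewrite addr_gt0 // mulr_gt0 // (pos_right rA pA aA t0, pos_right rB pB aB t0).
have iCX : ic zeta (rcons xi 0) := ic_shift aA aC iC.
have rXA := rz_X rA aA.
have pXA : 0 < lead_coef ('X * A) by rewrite lcXM.
have szeta : sorted <=%R zeta by case: rC => _ [].
have [omega [rD iD]] := L2 (erefl (size zeta)) szeta hl hr rB rXA pB pXA iC' iCX.
rewrite -/D in rD.
have [lcD _] := comb_lc pB pXA hl hr.
have aD : all (fun z => z <= 0) omega.
  apply: (nonpos_zeros rD) => t t0; rewrite /D hornerD !hornerZ.
  have := pos_right rXA pXA (all_rcons0 aA) t0.
  by move=> h; rewrite addr_gt0 // mulr_gt0 // (pos_right rB pB aB t0).
have iDX : ic omega (rcons zeta 0) := ic_shift aC aD iD.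
have -> : l *: ('X * A) + r *: ('X * B) = 'X * C by rewrite /C mulrDr !scalerAr.
split; first exact: (cube_of rC rD).
apply: (cube_of rD (rz_X rC aC)) => //; first by rewrite lcXM.
exact: all_rcons0.
Qed.

End Work5.

Theorem lemma4p4 (R : realType) (A B : {poly R}) :
  interp_cube1 A B -> interp_square A B B ('X * A).
Proof. exact: main. Qed.
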